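(* Let $\Omega\subset\mathbb{R}^n$ be a bounded Lipschitz domain, $T>0$, $\Omega_T=(0,T]\times\Omega$, $W$ a Hilbert space of measurable functions on $\Omega_T$ continuously embedded in $L^2(0,T;L^2(\Omega))$, $y_0\in L^2(\Omega)$, and $S:L^2(0,T;\mathbb{R}^2)\to W$ a continuous affine map with $\|S(u)\|_W\le C(\|u\|_{L^2(0,T;\mathbb{R}^2)}+\|y_0\|_{L^2(\Omega)})$ for a constant $C$ independent of $u,y_0$; let $S_0$ be its linear part (the map $S$ with $y_0=0$) and $\|S_0\|$ its operator norm from $L^2(0,T;\mathbb{R}^2)$ to $L^2(0,T;L^2(\omega_{\mathrm{obs}}))$, where $\omega_{\mathrm{obs}}\subset\Omega$. Let $y^d\in L^2(0,T;L^2(\omega_{\mathrm{obs}}))$, $\alpha>0$, and let $\mathcal{U}$ be the space of $\mathbb{R}^2$-valued functions on $[0,T]$ that are piecewise constant on a given grid $0=t_1<\dots<t_M=T$. Let $\beta>\|S_0\|^2+\alpha$ and let $\bar u\in\mathcal{U}$ be a local minimizer over $\mathcal{U}$ of $$J_\beta(u)=\frac12\|Su-y^d\|^2_{L^2(0,T;L^2(\omega_{\mathrm{obs}}))}+\frac\alpha2\|u\|^2_{L^2(0,T;\mathbb{R}^2)}+\beta\int_0^T|u_1(t)u_2(t)|\,dt.$$ Then $\bar u_1(t)\bar u_2(t)=0$ for all $t\in[0,T]$.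
   Context: $Su=S(u)$ is the state for control $u=(u_1,u_2)$, restricted to $(0,T)\times\omega_{\mathrm{obs}}$ in the tracking term. Piecewise constant means constant on each interval $(t_j,t_{j+1}]$. *)

(* Defs.v *)
From HB Require Import structures.
From mathcomp Require Import all_boot all_order all_algebra.
From mathcomp Require Import all_classical all_reals all_analysis.
Set Implicit Arguments. Unset Strict Implicit. Unset Printing Implicit Defensive.
Import Order.TTheory GRing.Theory Num.Theory.
Import numFieldNormedType.Exports.
Local Open Scope classical_set_scope.
Local Open Scope ring_scope.

(* A (representative of a) control u = (u_1, u_2) : R -> R^2, as a pair of
   real functions of time. *)
Definition ctrl (R : realType) := ((R -> R) * (R -> R))%type.

Section Defs.
Variable R : realType.

Definition czero : ctrl R := (fun _ => 0, fun _ => 0).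
Definition cadd (u v : ctrl R) : ctrl R :=
  (fun t => u.1 t + v.1 t, fun t => u.2 t + v.2 t).
Definition cscale (a : R) (u : ctrl R) : ctrl R :=
  (fun t => a * u.1 t, fun t => a * u.2 t).
Definition csub (u v : ctrl R) : ctrl R := cadd u (cscale (-1) v).

Definition L2ctrl (T : R) (u : ctrl R) : Prop :=
  [/\ measurable_fun `]0, T[ u.1, measurable_fun `]0, T[ u.2,
      (\int[lebesgue_measure]_(x in `]0%R, T[) ((u.1 x) ^+ 2)%:E
         < +oo)%E &
      (\int[lebesgue_measure]_(x in `]0%R, T[) ((u.2 x) ^+ 2)%:E
         < +oo)%E].

(* the norm of L^2(0,T;R^2) (meaningful for u with L2ctrl T u) *)
Definition cnorm (T : R) (u : ctrl R) : R :=
  Num.sqrt (Rintegral lebesgue_measure `]0, T[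
                      (fun t => u.1 t ^+ 2 + u.2 t ^+ 2)).

(* ip is an inner product on the normed space V inducing its norm;
   together with completeness of V this makes V a real Hilbert space. *)
Definition inner_product_of_norm (V : normedModType R) (ip : V -> V -> R)
  : Prop :=
  [/\ forall x y, ip x y = ip y x,
      forall (a : R) (x y z : V), ip (a *: x + y) z = a * ip x z + ip y z &
      forall x, `|x| ^+ 2 = ip x x].

Definition affine_on_L2 (V : normedModType R) (T : R) (S : ctrl R -> V)
  : Prop :=
  forall u v (l : R), L2ctrl T u -> L2ctrl T v ->
    S (cadd (cscale l u) (cscale (1 - l) v)) = l *: S u + (1 - l) *: S v.

Definition continuous_on_L2 (V : normedModType R) (T : R) (S : ctrl R -> V)
  : Prop :=
  forall u, L2ctrl T u -> forall e : R, 0 < e ->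
    exists2 d : R, 0 < d & forall v, L2ctrl T v ->
      cnorm T (csub v u) < d -> `|S v - S u| < e.

Definition lin_part (V : normedModType R) (S : ctrl R -> V) : ctrl R -> V :=
  fun u => S u - S czero.

Definition opnorm (V : normedModType R) (T : R) (A : ctrl R -> V) : R :=
  sup ((fun u => `|A u|) @` [set u | L2ctrl T u /\ cnorm T u <= 1]).

Definition time_grid (T : R) (M : nat) (grid : nat -> R) : Prop :=
  [/\ grid 0%N = 0, grid M = T &
      forall j : nat, (j < M)%N -> grid j < grid j.+1].

(* u is piecewise constant on the grid: u = c j on (t_j, t_{j+1}]
   (and u(0) = c 0, i.e. the first piece is [t_0, t_1]). *)
Definition pw_const (M : nat) (grid : nat -> R) (u : ctrl R) : Prop :=
  exists c : nat -> R * R,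
    [/\ u.1 0 = (c 0%N).1, u.2 0 = (c 0%N).2 &
        forall (j : nat) (t : R), (j < M)%N -> grid j < t <= grid j.+1 ->
          u.1 t = (c j).1 /\ u.2 t = (c j).2].

(* the objective J_beta; obsS u is the observed state (S u) restricted to
   (0,T) x omega_obs, an element of the Hilbert space H. *)
Definition Jbeta (H : normedModType R) (T alpha beta : R)
  (obsS : ctrl R -> H) (yd : H) (u : ctrl R) : R :=
  2^-1 * `|obsS u - yd| ^+ 2 + alpha / 2 * cnorm T u ^+ 2
  + beta * Rintegral lebesgue_measure `]0, T[ (fun t => `|u.1 t * u.2 t|).

End Defs.

(* Main.v *)
Require Import Defs.
From HB Require Import structures.
From mathcomp Require Import all_boot all_order all_algebra.
From mathcomp Require Import all_classical all_reals all_analysis.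
From mathcomp Require Import ring lra.
Import Order.TTheory GRing.Theory Num.Theory.
Import numFieldNormedType.Exports.
Local Open Scope classical_set_scope.
Local Open Scope ring_scope.
Set Implicit Arguments. Unset Strict Implicit. Unset Printing Implicit Defensive.

Section Helpers.
Variable R : realType.
Variables (T : R) (M : nat) (grid : nat -> R).
Hypothesis hg : time_grid T M grid.

Lemma grid_mono i j : (i <= j <= M)%N -> grid i <= grid j.
Proof.
case: hg => _ _ inc.
move=> /andP[]; elim: j => [|j IH].
  by rewrite leqn0 => /eqP ->.
rewrite leq_eqVlt => /orP[/eqP -> //|]; rewrite ltnS => ij jM.
apply: le_trans (IH ij (ltnW jM)) _; exact/ltW/inc.
Qed.

Lemma piece_ex t : 0 < t <= T -> exists2 j, (j < M)%N & grid j < t <= grid j.+1.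
Proof.
case: (hg) => g0 gM _.
suff H : forall k, (k <= M)%N -> 0 < t <= grid k ->
   exists2 j, (j < k)%N & grid j < t <= grid j.+1.
  by move=> ht; apply: H => //; rewrite gM.
elim=> [|k IH] kM /andP[t0 tk]; first by move: (lt_le_trans t0 tk); rewrite g0 ltxx.
case: (leP t (grid k)) => h.
  by case: (IH (ltnW kM)); [rewrite t0 h|move=> j jk hj; exists j => //; exact: ltnW].
by exists k => //; rewrite h tk.
Qed.

Lemma piece_uniq j k t : (j < M)%N -> (k < M)%N ->
  grid j < t <= grid j.+1 -> grid k < t <= grid k.+1 -> j = k.
Proof.
move=> jM kM /andP[a b] /andP[c d].
case: (ltngtP j k) => // jk.
  have h : grid j.+1 <= grid k by apply: grid_mono; rewrite jk ltnW.
  by move: (lt_le_trans c (le_trans d (le_refl _))) (le_trans b h) => _ q; move: (lt_le_trans c q); rewrite ltxx.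
have h : grid k.+1 <= grid j by apply: grid_mono; rewrite jk ltnW.
by move: (lt_le_trans a (le_trans d h)); rewrite ltxx.
Qed.

Definition pw_fun (f : R -> R) := exists d : nat -> R,
  forall j t, (j < M)%N -> grid j < t <= grid j.+1 -> f t = d j.

Lemma pw_fun_meas f : pw_fun f -> measurable_fun `]0, T[ f.
Proof.
move=> [d hd].
pose E i : set R := if (i < M)%N then [set` `]grid i, grid i.+1]] else set0.
have mE : forall i, measurable (E i).
  by move=> i; rewrite /E; case: ifP.
apply: (measurable_funS (E := \bigcup_i E i)).
- exact: bigcup_measurable.
- move=> t; rewrite /= in_itv /= => /andP[t0 tT].
  have [j jM hj] : exists2 j, (j < M)%N & grid j < t <= grid j.+1 by apply: piece_ex; rewrite t0 ltW.
  by exists j => //; rewrite /E jM /= in_itv /=.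
apply/measurable_fun_bigcup => // i; rewrite /E; case: ifP => iM.
  apply: (eq_measurable_fun (cst (d i))); last exact: measurable_cst.
  by move=> t; rewrite inE /= in_itv /= => ht; rewrite (hd i t).
exact: measurable_fun_set0.
Qed.

Lemma pw_fun_int f : pw_fun f ->
  lebesgue_measure.-integrable `]0, T[ (EFin \o f).
Proof.
move=> pf; apply: measurable_bounded_integrable => //.
- have := lebesgue_measure_itv `]0, T[; rewrite /= => ->; by case: ifP => //; rewrite -EFinD ltry.
- exact: pw_fun_meas.
case: pf => d hd.
exists (\sum_(i < M) `|d i|); split; first by rewrite num_real.
move=> x xM y; rewrite /= in_itv /= => /andP[y0 yT].
have [j jM hj] : exists2 j, (j < M)%N & grid j < y <= grid j.+1 by apply: piece_ex; rewrite y0 ltW.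
rewrite (hd j y) // (le_trans _ (ltW xM)) //.
rewrite (bigD1 (Ordinal jM)) //= lerDl; exact: sumr_ge0.
Qed.


Lemma pw_fun_comb (F : R -> R -> R) f g : pw_fun f -> pw_fun g ->
  pw_fun (fun t => F (f t) (g t)).
Proof.
move=> [d hd] [d' hd']; exists (fun j => F (d j) (d' j)) => j t jM ht.
by rewrite (hd j t) // (hd' j t).
Qed.

Lemma pw_const_fun u : pw_const M grid u -> pw_fun u.1 /\ pw_fun u.2.
Proof.
move=> [c [_ _ hc]]; split.
  by exists (fun j => (c j).1) => j t jM ht; case: (hc j t jM ht).
by exists (fun j => (c j).2) => j t jM ht; case: (hc j t jM ht).
Qed.

Lemma pw_fun_L2 u : pw_fun u.1 -> pw_fun u.2 -> L2ctrl T u.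
Proof.
move=> p1 p2; split; try exact: pw_fun_meas.
- have /integrableP[_ h] := pw_fun_int (pw_fun_comb (fun x _ => x ^+ 2) p1 p1).
  apply: le_lt_trans h; rewrite le_eqVlt; apply/orP; left; apply/eqP.
  by apply: eq_integral => x _ /=; rewrite ger0_norm // sqr_ge0.
- have /integrableP[_ h] := pw_fun_int (pw_fun_comb (fun x _ => x ^+ 2) p2 p2).
  apply: le_lt_trans h; rewrite le_eqVlt; apply/orP; left; apply/eqP.
  by apply: eq_integral => x _ /=; rewrite ger0_norm // sqr_ge0.
Qed.

Lemma pw_const_L2 u : pw_const M grid u -> L2ctrl T u.
Proof. by move=> /pw_const_fun[]; exact: pw_fun_L2. Qed.

Lemma pw_const0 : pw_const M grid (@Defs.czero R).
Proof. by exists (fun _ => (0, 0)); split => //. Qed.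

Lemma pw_const_add u v : pw_const M grid u -> pw_const M grid v ->
  pw_const M grid (Defs.cadd u v).
Proof.
move=> [c [c1 c2 hc]] [c' [c1' c2' hc']].
exists (fun j => ((c j).1 + (c' j).1, (c j).2 + (c' j).2)); split => /=.
- by rewrite c1 c1'.
- by rewrite c2 c2'.
move=> j t jM ht; case: (hc j t jM ht) => -> ->; case: (hc' j t jM ht) => -> ->.
by [].
Qed.

Lemma pw_const_scale k u : pw_const M grid u -> pw_const M grid (Defs.cscale k u).
Proof.
move=> [c [c1 c2 hc]].
exists (fun j => (k * (c j).1, k * (c j).2)); split => /=.
- by rewrite c1.
- by rewrite c2.
move=> j t jM ht; case: (hc j t jM ht) => -> ->.
by [].
Qed.

Lemma Rint_lin f g k : pw_fun f -> pw_fun g ->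
  Rintegral lebesgue_measure `]0, T[ (fun t => f t + k * g t) =
  Rintegral lebesgue_measure `]0, T[ f + k * Rintegral lebesgue_measure `]0, T[ g.
Proof.
move=> pf pg.
rewrite RintegralD //; first by rewrite RintegralZl //; exact: pw_fun_int.
  exact: pw_fun_int.
exact: pw_fun_int (pw_fun_comb (fun _ x => k * x) pf pg).
Qed.

End Helpers.

Section Aff.
Variable R : realType.
Variables (T : R) (M : nat) (grid : nat -> R).
Hypothesis hg : time_grid T M grid.
Variables (V : normedModType R) (S : ctrl R -> V).
Hypothesis haff : affine_on_L2 T S.

Lemma S_scale k u : pw_const M grid u ->
  S (Defs.cscale k u) = k *: S u + (1 - k) *: S (@Defs.czero R).
Proof.
move=> pu.
have := @haff _ _ k (pw_const_L2 hg pu) (pw_const_L2 hg (pw_const0 M grid)).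
suff -> : Defs.cadd (Defs.cscale k u) (Defs.cscale (1 - k) (@Defs.czero R))
   = Defs.cscale k u by [].
rewrite /Defs.cadd /Defs.cscale /Defs.czero /=; congr pair; apply/funext => x;
  by rewrite mulr0 addr0.
Qed.

Lemma S_add u v : pw_const M grid u -> pw_const M grid v ->
  S (Defs.cadd u v) = S u + S v - S (@Defs.czero R).
Proof.
move=> pu pv.
have := @haff _ _ 2^-1 (pw_const_L2 hg (pw_const_scale 2 pu)) (pw_const_L2 hg (pw_const_scale 2 pv)).
rewrite !S_scale //.
have -> : Defs.cadd (Defs.cscale 2^-1 (Defs.cscale 2 u))
    (Defs.cscale (1 - 2^-1) (Defs.cscale 2 v)) = Defs.cadd u v.
  rewrite /Defs.cadd /Defs.cscale /=; congr pair; apply/funext => x; lra.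
move=> ->.
have h : (1 - 2^-1 : R) = 2^-1 by lra.
rewrite h !scalerDr !scalerA.
have -> : (2^-1 * 2 : R) = 1 by lra.
have -> : (2^-1 * (1 - 2) : R) = - 2^-1 by lra.
rewrite !scale1r.
rewrite addrACA -scalerDl.
have -> : (- 2^-1 + - 2^-1 : R) = -1 by lra.
by rewrite scaleN1r.
Qed.

End Aff.

Lemma mu_pos (R : realType) (a b T0 : R) (X : set R) : 0 < T0 -> a < b -> measurable X ->
  [set` `]a, b[] `<=` X -> X `<=` [set` `]0, T0[] ->
  0 < fine (lebesgue_measure X).
Proof.
move=> T00 ab mX s1 s2.
have e1 : lebesgue_measure [set` `]a, b[] = (b - a)%:E.
  rewrite lebesgue_measure_itv /=; case: ifP; first by rewrite -EFinD. by rewrite lte_fin ab.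
have e2 : (lebesgue_measure [set` `]0%R, T0[] <= T0%:E)%E.
  rewrite lebesgue_measure_itv /=; case: ifP => h; last by move: h; rewrite lte_fin T00. by rewrite -EFinD subr0.
have l1 : ((b - a)%:E <= lebesgue_measure X)%E.
  rewrite -e1; apply: le_measure => //; rewrite inE //; exact: measurable_itv.
have l2 : (lebesgue_measure X <= T0%:E)%E.
  apply: le_trans e2; apply: le_measure => //; rewrite inE //; exact: measurable_itv.
move: l1 l2; case: (lebesgue_measure X) => [r||] //=.
by rewrite !lee_fin => hr _; lra.
Qed.

Lemma memoo (R : realType) (a b s : R) : [set` `]a, b[] s = (a < s < b).
Proof. by rewrite /= in_itv. Qed.
Lemma memoc (R : realType) (a b s : R) : [set` `]a, b]] s = (a < s <= b).
Proof. by rewrite /= in_itv. Qed.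

Lemma modalg (R : realType) (V : lmodType R) (X Y Z : V) (k : R) :
  X + (k *: Y + (1 - k) *: Z) - Z = X + k *: (Y - Z).
Proof. by rewrite scalerBl scale1r scalerBr [Z - _]addrC !addrA addrK. Qed.

Lemma normsq (R : realType) (V : normedModType R) (ip : V -> V -> R)
  (w z : V) (s : R) : inner_product_of_norm ip ->
  `|w + s *: z| ^+ 2 = `|w| ^+ 2 + 2 * s * ip w z + s ^+ 2 * `|z| ^+ 2.
Proof.
case=> sym lin nrm.
have L : forall y, ip (w + s *: z) y = s * ip z y + ip w y by move=> y; rewrite addrC lin.
have L' : forall y, ip y (w + s *: z) = s * ip y z + ip y w.
  by move=> y; rewrite sym L (sym z) (sym w).
rewrite !nrm L !L' (sym z w); ring.
Qed.

Unset Implicit Arguments.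

Theorem theorem3p3 (R : realType)
  (W : completeNormedModType R) (ipW : W -> W -> R)
  (H : completeNormedModType R) (ipH : H -> H -> R)
  (Y0 : normedModType R) (y0 : Y0)
  (obs : {linear W -> H})
  (T alpha beta : R) (M : nat) (grid : nat -> R)
  (S : ctrl R -> W) (yd : H) (ubar : ctrl R) :
  0 < T ->
  time_grid T M grid ->
  inner_product_of_norm ipW ->
  inner_product_of_norm ipH ->
  (exists c : R, forall w : W, `|obs w| <= c * `|w|) ->
  affine_on_L2 T S ->
  continuous_on_L2 T S ->
  (exists C : R, forall u, L2ctrl T u -> `|S u| <= C * (cnorm T u + `|y0|)) ->
  0 < alpha ->
  opnorm T (fun u => obs (lin_part S u)) ^+ 2 + alpha < beta ->
  pw_const M grid ubar ->
  (exists2 e : R, 0 < e & forall u, pw_const M grid u ->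
      cnorm T (csub u ubar) < e ->
      Jbeta T alpha beta (fun v => obs (S v)) yd ubar
        <= Jbeta T alpha beta (fun v => obs (S v)) yd u) ->
  forall t : R, 0 <= t <= T -> ubar.1 t * ubar.2 t = 0.
Proof.
move=> hT hg _ hip [c hc] haff _ [C hC] ha hbeta hpw [e he hmin] t ht.
apply/eqP/negPn/negP => hne.
have [cc [h01 h02 hcc]] := hpw.
have [g0 gM ginc] := hg.
have M0 : (0 < M)%N.
  by case: M gM {hcc ginc hmin hbeta hpw hg} => // gM; move: hT; rewrite -gM g0 ltxx.
have [j jM hj] : exists2 j, (j < M)%N & ubar.1 t = (cc j).1 /\ ubar.2 t = (cc j).2.
  case: (eqVneq t 0) => [->|t0]; first by exists 0%N.
  have [j jM hj] : exists2 j, (j < M)%N & grid j < t <= grid j.+1.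
    by apply: (piece_ex hg); case/andP: ht => t0' ->; rewrite andbT lt_neqAle eq_sym t0.
  by exists j => //; exact: hcc.
set a := (cc j).1; set b := (cc j).2.
have hab : a * b != 0 by case: hj => e1 e2; rewrite /a /b -e1 -e2.
pose sig : R := if 0 < a * b then 1 else -1.
have hsig2 : sig ^+ 2 = 1 by rewrite /sig; case: ifP => _; rewrite ?expr1n ?sqrrN ?expr1n.
have hsab : sig * (a * b) = `|a * b|.
  rewrite /sig; case: ifP => h; first by rewrite mul1r gtr0_norm.
  by rewrite ltr0_norm ?mulN1r // lt_neqAle hab /= leNgt h.
pose chi (t : R) : R := if ((grid j < t) && (t <= grid j.+1)) || ((j == 0%N) && (t == 0)) then 1 else 0.
have hchi : forall t, chi t = 0 \/ [/\ chi t = 1, ubar.1 t = a & ubar.2 t = b].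
  move=> s; rewrite /chi; case: ifP => h; [right|by left].
  case/orP: h => [h|/andP[/eqP j0 /eqP ->]]; last by rewrite /a /b h01 h02 j0.
  by case: (hcc j s jM h).
pose dchi (i : nat) : R := if i == j then 1 else 0.
have pchi' : forall i s, (i < M)%N -> grid i < s <= grid i.+1 -> chi s = dchi i.
  move=> i s iM hs.
  have s0 : s != 0.
    have := grid_mono hg (i := 0%N) (j := i); rewrite leq0n ltnW //= g0 => /(_ isT) gi.
    by case/andP: hs => hs _; rewrite gt_eqF // (le_lt_trans gi hs).
  rewrite /chi /dchi (negbTE s0) andbF orbF.
  case: (eqVneq i j) => [eij|ij]; first by subst i; rewrite hs.
  case: ifP => // hs'; exfalso; move/eqP: ij; apply; exact: (piece_uniq hg iM jM hs hs').
have pchi : pw_fun M grid chi by exists dchi.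
have chi0 : chi 0 = dchi 0%N.
  rewrite /chi /dchi eqxx andbT.
  have := grid_mono hg (i := 0%N) (j := j); rewrite leq0n ltnW //= g0 => /(_ isT) gj.
  by rewrite ltNge gj /= eq_sym.
pose v : ctrl R := (chi, fun s => - sig * chi s).
have pv : pw_const M grid v.
  exists (fun i => (dchi i, - sig * dchi i)); split => /=; rewrite ?chi0 //.
  by move=> i s iM hs; rewrite (pchi' i s iM hs).
pose m := Rintegral lebesgue_measure `]0, T[ chi.
have hm : 0 < m.
  pose P := [set` `]grid j, grid j.+1]].
  have mP : measurable P by exact: measurable_itv.
  have -> : m = fine (lebesgue_measure (P `&` [set` `]0, T[])).
    rewrite /m; transitivity (Rintegral lebesgue_measure `]0, T[ (\1_P)); last first.
      by rewrite /Rintegral integral_indic.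
    apply: eq_Rintegral => s; rewrite inE /= in_itv /= => /andP[s0 _].
    rewrite /P (gt_eqF s0) andbF orbF; case: ifP => h.
      by rewrite mem_set //=.
    by rewrite memNset // => hs; have : s \in `]grid j, grid j.+1] := hs; rewrite inE /= subitvE /= !bnd_simp h.

  have gj : 0 <= grid j.
    by have := grid_mono hg (i := 0%N) (j := j); rewrite leq0n ltnW //= g0 => /(_ isT).
  have gj1 : grid j.+1 <= T.
    by have := grid_mono hg (i := j.+1) (j := M); rewrite jM leqnn /= gM => /(_ isT).
  apply: (mu_pos (a := grid j) (b := grid j.+1) hT (ginc j jM)).
  - exact: measurableI.
  - move=> s; rewrite memoo => /andP[h1 h2]; split.
      by rewrite /P memoc h1 ltW.
    by rewrite memoo (le_lt_trans gj h1) (lt_le_trans h2 gj1).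
  - by move=> s [].
pose P := opnorm T (fun u => obs (lin_part S u)).
have cn0 : cnorm T (@Defs.czero R) = 0.
  by rewrite /cnorm /= Rintegral_cst //= expr0n /= addr0 mul0r sqrtr0.
have L0 : L2ctrl T (@Defs.czero R) := pw_const_L2 hg (pw_const0 M grid).
have Sb : forall u, L2ctrl T u -> cnorm T u <= 1 -> `|S u| <= `|C| * (1 + `|y0|).
  move=> u Lu nu; have := hC u Lu; have := sqrtr_ge0 (Rintegral lebesgue_measure `]0, T[ (fun t => u.1 t ^+ 2 + u.2 t ^+ 2)).
  rewrite -/(cnorm T u) => n0 h.
  have := ler_norm C; have := normr_ge0 C; have := normr_ge0 y0; have := normr_ge0 (S u).
  move: h nu n0; set x := cnorm T u; set yy := `|y0|; set nC := `|C|; set nS := `|S u|.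
  move=> *; nra.
have hP : forall u, L2ctrl T u -> cnorm T u <= 1 -> `|obs (lin_part S u)| <= P.
  move=> u Lu nu; apply: sup_upper_bound; last by exists u.
  split; first by exists `|obs (lin_part S (@Defs.czero R))|, (@Defs.czero R); split => //; rewrite cn0.
  exists (`|c| * (2 * (`|C| * (1 + `|y0|)))) => _ [u' [Lu' nu'] <-].
  have h1 := hc (lin_part S u'); have h2 := Sb u' Lu' nu'.
  have h3 : `|S (@Defs.czero R)| <= `|C| * (1 + `|y0|) by apply: Sb => //; rewrite cn0.
  have h4 : `|lin_part S u'| <= `|S u'| + `|S (@Defs.czero R)| by rewrite /lin_part ler_normB.
  have := ler_norm c; have := normr_ge0 c; have := normr_ge0 (lin_part S u').
  move: h1 h2 h3 h4; set A := `|obs _|; set B := `|lin_part S u'|; set K := `|C| * _.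
  set s1 := `|S u'|; set s2 := `|S _|; set nc := `|c|.
  move=> *; nra.
have [pu1 pu2] := pw_const_fun hpw.
have ichi := pw_fun_int hg pchi.
have sigE : sig = 1 \/ sig = -1 by rewrite /sig; case: ifP; [left|right].
pose us (s : R) := Defs.cadd ubar (Defs.cscale s v).
have pus : forall s, pw_const M grid (us s).
  by move=> s; apply: pw_const_add => //; exact: pw_const_scale.
have I1 : forall s, cnorm T (us s) ^+ 2
    = cnorm T ubar ^+ 2 + (2 * s * (a - sig * b) + 2 * s ^+ 2) * m.
  move=> s; rewrite /cnorm !sqr_sqrtr; first last.
  - by apply: Rintegral_ge0 => x _; rewrite addr_ge0 // sqr_ge0.
  - by apply: Rintegral_ge0 => x _; rewrite addr_ge0 // sqr_ge0.
  rewrite /m -(Rint_lin hg _ (pw_fun_comb (fun x y => x ^+ 2 + y ^+ 2) pu1 pu2) pchi).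
  apply: eq_Rintegral => x _ /=; rewrite -?/(chi x).
  case: (hchi x) => [->|[-> -> ->]]; first by ring.
  by case: sigE => ->; ring.
pose Kb (s : R) := `|(a + s * 1) * (b + s * (- sig * 1))| - `|a * b|.
have I2 : forall s, Rintegral lebesgue_measure `]0, T[ (fun t => `|(us s).1 t * (us s).2 t|)
    = Rintegral lebesgue_measure `]0, T[ (fun t => `|ubar.1 t * ubar.2 t|) + Kb s * m.
  move=> s; rewrite /m -(Rint_lin hg _ (pw_fun_comb (fun x y => `|x * y|) pu1 pu2) pchi).
  apply: eq_Rintegral => x _ /=; rewrite -?/(chi x).
  case: (hchi x) => [->|[-> -> ->]]; first by rewrite !mulr0 !addr0.
  by rewrite /Kb; ring.
have I3 : forall s, cnorm T (csub (us s) ubar) ^+ 2 = 2 * s ^+ 2 * m.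
  move=> s; rewrite /cnorm sqr_sqrtr; last first.
    by apply: Rintegral_ge0 => x _; rewrite addr_ge0 // sqr_ge0.
  rewrite /m -RintegralZl //.
  apply: eq_Rintegral => x _ /=; rewrite -?/(chi x).
  case: (hchi x) => [->|[-> -> ->]]; first by ring.
  by case: sigE => ->; ring.
have I4 : forall k, cnorm T (Defs.cscale k v) ^+ 2 = 2 * k ^+ 2 * m.
  move=> k; rewrite /cnorm sqr_sqrtr; last first.
    by apply: Rintegral_ge0 => x _; rewrite addr_ge0 // sqr_ge0.
  rewrite /m -RintegralZl //.
  apply: eq_Rintegral => x _ /=; rewrite -?/(chi x).
  case: (hchi x) => [->|[-> _ _]]; first by ring.
  by case: sigE => ->; ring.
pose S0 := S (@Defs.czero R).
pose z := obs (S v - S0).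
pose w := obs (S ubar) - yd.
have SUS : forall s, S (us s) = S ubar + s *: (S v - S0).
  move=> s; rewrite /us (S_add hg haff) //; last exact: pw_const_scale.
  by rewrite (S_scale hg haff) // modalg.
have OBS : forall s, obs (S (us s)) - yd = w + s *: z.
  by move=> s; rewrite SUS linearD linearZ /w /z addrAC.
have nsig : `|sig| = 1 by case: sigE => ->; rewrite ?normrN normr1.
have KbE : forall s, `|s| <= 1 -> `|s| * (`|a| + `|b| + 1) <= `|a * b| ->
    Kb s = s * (sig * b - a) - s ^+ 2.
  move=> s s1 s2; rewrite /Kb.
  set x := (a + s * 1) * (b + s * (- sig * 1)).
  have ex : sig * x = sig * (a * b) + s * (sig * b - a) - s ^+ 2.
    by rewrite /x; case: sigE => ->; ring.
  rewrite hsab in ex.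
  have hy : `|s * (sig * b - a)| <= `|s| * (`|a| + `|b|).
    rewrite normrM ler_wpM2l //; apply: le_trans (ler_normB _ _) _.
    by rewrite normrM nsig mul1r addrC.
  move: hy; rewrite ler_norml => /andP[hy1 _].
  have hs2 : s ^+ 2 <= `|s|.
    have := real_normK (num_real s); have := normr_ge0 s.
    move: s1; set ns := `|s|; move=> *; nra.
  have pos : 0 <= sig * x.
    rewrite ex; move: hy1 hs2 s2; set ns := `|s|; set na := `|a|; set nb := `|b|.
    move=> *; nra.
  have -> : `|x| = sig * x.
    by rewrite -(ger0_norm pos) [in RHS]normrM nsig mul1r.
  by rewrite ex; ring.
pose Jf := Jbeta T alpha beta (fun v => obs (S v)) yd.
pose A := ipH w z + alpha * (a - sig * b) * m + beta * (sig * b - a) * m.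
pose B := 2^-1 * `|z| ^+ 2 + alpha * m - beta * m.
have JE : forall s, `|s| <= 1 -> `|s| * (`|a| + `|b| + 1) <= `|a * b| ->
    Jf (us s) = Jf ubar + s * A + s ^+ 2 * B.
  move=> s s1 s2; rewrite /Jf /Jbeta OBS I1 I2 (KbE s s1 s2) (normsq _ _ _ hip) -/w.
  by rewrite /A /B; field.
pose r := Num.sqrt (2 * m).
have r0 : 0 < r by rewrite sqrtr_gt0; lra.
have r2 : r ^+ 2 = 2 * m by rewrite sqr_sqrtr //; lra.
pose k := r^-1.
have kr : k * r = 1 by rewrite /k mulVf // gt_eqF.
have k0 : 0 < k by rewrite /k invr_gt0.
have nv : cnorm T (Defs.cscale k v) <= 1.
  have h := I4 k; have := sqrtr_ge0 (Rintegral lebesgue_measure `]0, T[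
     (fun t => (Defs.cscale k v).1 t ^+ 2 + (Defs.cscale k v).2 t ^+ 2)).
  rewrite -/(cnorm T (Defs.cscale k v)); move: h; set q := cnorm T _.
  move=> h q0; have : q ^+ 2 = 1.
    by rewrite h; move: kr r2; move=> *; nra.
  move=> *; nra.
have hz := hP _ (pw_const_L2 hg (pw_const_scale k pv)) nv.
rewrite /lin_part (S_scale hg haff k pv) -[k *: S v + _]add0r modalg add0r linearZ normrZ in hz.
rewrite -/S0 -/z (gtr0_norm k0) in hz.
have zb : `|z| ^+ 2 <= P ^+ 2 * (2 * m).
  have := normr_ge0 z; move: hz kr r2 r0 k0; set nz := `|z|; move=> hz kr r2 r0 k0 nz0.
  have h1 : nz <= P * r.
    have : r * (P - k * nz) >= 0 by rewrite mulr_ge0 ?subr_ge0 // ltW.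
    have -> : r * (P - k * nz) = P * r - nz by rewrite mulrBr mulrA (mulrC r k) kr mul1r mulrC.
    by rewrite subr_ge0.
  have h2 : nz ^+ 2 <= (P * r) ^+ 2 by rewrite ler_pXn2r // ?nnegrE // (le_trans nz0 h1).
  by rewrite exprMn r2 in h2.
have Bneg : B < 0.
  rewrite /B; move: zb hbeta hm; rewrite -/P; set nz := `|z|; move=> *; nra.
have na0 : 0 < `|a| + `|b| + 1 by rewrite ltr_wpDl // addr_ge0.
have nab0 : 0 < `|a * b| by rewrite normr_gt0.
pose q1 := `|a * b| / (`|a| + `|b| + 1).
pose q2 := e ^+ 2 / (2 * (m + 1)).
have q1E : q1 * (`|a| + `|b| + 1) = `|a * b| by rewrite /q1 divfK // gt_eqF.
have q2E : q2 * (2 * (m + 1)) = e ^+ 2 by rewrite /q2 divfK // gt_eqF //; lra.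
have q10 : 0 < q1 by rewrite /q1 divr_gt0.
have q20 : 0 < q2 by rewrite /q2 divr_gt0 ?exprn_gt0 //; lra.
pose s0 := Num.min 1 (Num.min q1 q2).
have s00 : 0 < s0 by rewrite /s0 !lt_min ltr01 q10 q20.
have s01 : s0 <= 1 by rewrite /s0 ge_min lexx.
have s0q1 : s0 <= q1 by rewrite /s0 !ge_min lexx orbT.
have s0q2 : s0 <= q2 by rewrite /s0 !ge_min lexx !orbT.
pose ss := if 0 <= A then - s0 else s0.
have ns : `|ss| = s0 by rewrite /ss; case: ifP => _; rewrite ?normrN gtr0_norm.
have sA : ss * A <= 0.
  by rewrite /ss; case: ifP => h; [rewrite mulNr oppr_le0 mulr_ge0 // ltW | rewrite pmulr_rle0 //; apply: ltW; rewrite ltNge h].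
have sq2 : ss ^+ 2 = s0 ^+ 2 by rewrite -ns real_normK // num_real.
have c1 : `|ss| <= 1 by rewrite ns.
have c2 : `|ss| * (`|a| + `|b| + 1) <= `|a * b|.
  by rewrite ns; move: q1E s0q1 na0; set D := _ + 1; move=> *; nra.
have hJ := JE ss c1 c2.
have hd : cnorm T (csub (us ss) ubar) < e.
  have := I3 ss; have := sqrtr_ge0 (Rintegral lebesgue_measure `]0, T[
     (fun t => (csub (us ss) ubar).1 t ^+ 2 + (csub (us ss) ubar).2 t ^+ 2)).
  rewrite -/(cnorm T (csub (us ss) ubar)); set q := cnorm T _.
  rewrite sq2 => q0 h.
  have : q ^+ 2 < e ^+ 2.
    rewrite h.
    have p0 : s0 ^+ 2 <= s0 by rewrite expr2 ler_piMl // ltW.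
    have p1 : s0 ^+ 2 * m <= s0 * m by rewrite ler_wpM2r // ltW.
    have p2 : s0 * m <= q2 * m by rewrite ler_wpM2r // ltW.
    have q2E' : 2 * (q2 * m) + 2 * q2 = e ^+ 2 by rewrite -q2E; ring.
    have : 2 * s0 ^+ 2 * m = 2 * (s0 ^+ 2 * m) by ring.
    move=> ->; lra.
  move=> *; nra.
have := hmin (us ss) (pus ss) hd; rewrite -/Jf hJ.
have : ss ^+ 2 * B < 0 by rewrite sq2 pmulr_rlt0 ?exprn_gt0.
move=> *; lra.
Qed.
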